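(* Let $F$ be a non-archimedean local field over a dyadic place, with valuation ring $\mathfrak{o}$ and maximal ideal $\mathfrak{p}$. Let $\lambda\in\mathfrak{o}$, $\lambda\neq 0$, with $ord_\mathfrak{p}(\lambda)\in\{0,1\}$. Then the lattice $\mathfrak{o}^2$ is $\mathfrak{o}$-maximal for the quadratic form $q(x,y)=x^2+\lambda y^2$ on $F^2$ if and only if $\mathfrak{d}(-\lambda)=\mathfrak{p}$.
   Context: A lattice is a finitely generated $\mathfrak{o}$-submodule spanning $F^2$; its norm $\mathfrak{n}\Lambda$ is the fractional ideal generated by $q(\Lambda)$; $\Lambda$ is $\mathfrak{o}$-maximal if $\mathfrak{n}\Lambda\subset\mathfrak{o}$ and no lattice $\Lambda'\supsetneq\Lambda$ has $\mathfrak{n}\Lambda'\subset\mathfrak{o}$. The quadratic defect of $\alpha\in F$ is $\mathfrak{d}(\alpha)=\bigcap_{\xi\in F}(\alpha-\xi^2)\mathfrak{o}$ (so $\mathfrak{d}(\alpha)=0$ if $\alpha$ is a square). *)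

(* Defs.v *)
From mathcomp Require Import all_boot all_order all_algebra.
Set Implicit Arguments. Unset Strict Implicit. Unset Printing Implicit Defensive.
Import Order.TTheory GRing.Theory Num.Theory.
Local Open Scope ring_scope.

(* A field F equipped with a normalized discrete valuation v : F -> int
   (the value v 0 is irrelevant and never used). *)
Section LocalField.
Variables (F : fieldType) (v : F -> int).

Definition vring (x : F) : Prop := x = 0 \/ 0 <= v x.
Definition vmax (x : F) : Prop := x = 0 \/ 1 <= v x.

Definition valuation_axioms : Prop :=
  [/\ forall x y, x != 0 -> y != 0 -> v (x * y) = v x + v y,
      forall x y, x != 0 -> y != 0 -> x + y != 0 ->
                  Order.min (v x) (v y) <= v (x + y)
    & exists pi : F, pi != 0 /\ v pi = 1 ].

Definition vcomplete : Prop :=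
  forall u : nat -> F,
    (forall k : int, exists N, forall m n, (N <= m)%N -> (N <= n)%N ->
        u m - u n = 0 \/ k <= v (u m - u n)) ->
    exists l : F, forall k : int, exists N, forall n, (N <= n)%N ->
        u n - l = 0 \/ k <= v (u n - l).

Definition finite_residue : Prop :=
  exists s : seq F, (forall y, y \in s -> vring y) /\
    forall x, vring x -> exists2 y, y \in s & vmax (x - y).

(* F is a non-archimedean local field of characteristic 0 (completion of a
   number field) lying over a dyadic place: the residue characteristic is 2,
   i.e. 2 lies in the maximal ideal. *)
Definition dyadic_local_field : Prop :=
  [/\ valuation_axioms, vcomplete, finite_residue,
      (forall n : nat, (0 < n)%N -> n%:R != 0 :> F)
    & vmax 2].

Definition vec := 'rV[F]_2.

Definition is_lattice (L : vec -> Prop) : Prop :=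
  [/\ L 0,
      (forall x y, L x -> L y -> L (x + y)),
      (forall a x, vring a -> L x -> L (a *: x)),
      (exists n (g : 'I_n -> vec), (forall i, L (g i)) /\
         forall x, L x -> exists c : 'I_n -> F,
            (forall i, vring (c i)) /\ x = \sum_i c i *: g i)
    &
      (forall w : vec, exists n (g : 'I_n -> vec) (c : 'I_n -> F),
         (forall i, L (g i)) /\ w = \sum_i c i *: g i)].

Definition qform (lam : F) (x : vec) : F :=
  x 0 0 ^+ 2 + lam * x 0 1 ^+ 2.

(* n(L) ⊆ o : the fractional ideal generated by q(L) lies in o *)
Definition norm_in_o (lam : F) (L : vec -> Prop) : Prop :=
  forall x, L x -> vring (qform lam x).

Definition o_maximal (lam : F) (L : vec -> Prop) : Prop :=
  [/\ is_lattice L, norm_in_o lam L &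
      forall L' : vec -> Prop, is_lattice L' ->
        (forall x, L x -> L' x) -> (exists x, L' x /\ ~ L x) ->
        ~ norm_in_o lam L'].

Definition std_lattice (x : vec) : Prop := vring (x 0 0) /\ vring (x 0 1).

Definition qdefect (a : F) (z : F) : Prop :=
  forall xi : F, exists r : F, vring r /\ z = (a - xi ^+ 2) * r.

End LocalField.

(* Main.v *)
Require Import Defs.
From mathcomp Require Import all_boot all_order all_algebra.
From mathcomp Require Import zify ring.
Import Order.TTheory GRing.Theory Num.Theory.
Local Open Scope ring_scope.
Set Implicit Arguments. Unset Strict Implicit. Unset Printing Implicit Defensive.

Section Val.
Variables (F : fieldType) (v : F -> int).
Hypothesis hv : valuation_axioms v.

Ltac vlia := repeat match goal with
 | H : context [v _] |- _ => revert H
 end; repeat match goal with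
 | |- context [v ?t] => let a := fresh "a" in set a := v t; clearbody a
 end;
 repeat match goal with
 | H : is_true (~~ (@eq_op ?T _ _)) |- _ => lazymatch T with int => fail | _ => clear H end
 | H : is_true (@eq_op ?T _ _) |- _ => lazymatch T with int => fail | _ => clear H end
 | H : @eq ?T _ _ |- _ => lazymatch T with int => fail | _ => clear H end
 | H : valuation_axioms _ |- _ => clear H
 end; lia.

Lemma vM x y : x != 0 -> y != 0 -> v (x * y) = v x + v y.
Proof. by case: hv => h _ _; apply: h. Qed.

Lemma vA x y : x != 0 -> y != 0 -> x + y != 0 -> Order.min (v x) (v y) <= v (x + y).
Proof. by case: hv => _ h _; apply: h. Qed.

Lemma vAx x y : x != 0 -> y != 0 -> x + y != 0 -> v x <= v (x + y) \/ v y <= v (x + y).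
Proof. move=> nx ny nxy; have := vA nx ny nxy; rewrite ge_min; case/orP; auto. Qed.

Lemma v1 : v 1 = 0.
Proof. have := vM (oner_neq0 F) (oner_neq0 F); rewrite mulr1 => h. by apply: (addrI (v 1)); rewrite addr0 -h. Qed.

Lemma vN1 : v (-1) = 0.
Proof.
have h : (-1 : F) != 0 by rewrite oppr_eq0 oner_neq0.
have := vM h h; rewrite mulrNN mulr1 v1; vlia.
Qed.

Lemma vN x : v (- x) = v x.
Proof.
case: (eqVneq x 0) => [->|nx]; first by rewrite oppr0.
have h : (-1 : F) != 0 by rewrite oppr_eq0 oner_neq0.
by rewrite -mulN1r vM // vN1 add0r.
Qed.

Lemma vV x : x != 0 -> v (x^-1) = - v x.
Proof.
move=> nx; have := vM nx (invr_neq0 nx); rewrite mulfV // v1; vlia.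
Qed.

Lemma vX2 x : x != 0 -> v (x ^+ 2) = v x + v x.
Proof. by move=> nx; rewrite expr2 vM. Qed.

Lemma v_lt x y : x != 0 -> y != 0 -> v x < v y -> x + y != 0 /\ v (x + y) = v x.
Proof.
move=> nx ny lt.
have nxy : x + y != 0.
  apply/eqP => e; move: lt; have -> : y = - x by apply/eqP; rewrite -addr_eq0 addrC e.
  rewrite vN; vlia.
split => //.
have := vAx nx ny nxy; have e : x = (x + y) + (- y) by rewrite addrK.
have nny : - y != 0 by rewrite oppr_eq0.
have h2 : (x + y) + - y != 0 by rewrite -e.
have := vAx nxy nny h2; rewrite -e vN. vlia.
Qed.

Lemma vring_nz x : x != 0 -> vring v x -> 0 <= v x.
Proof. by move=> nx [e|//]; rewrite e eqxx in nx. Qed.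

Lemma vmax_nz x : x != 0 -> vmax v x -> 1 <= v x.
Proof. by move=> nx [e|//]; rewrite e eqxx in nx. Qed.

Lemma vringD x y : vring v x -> vring v y -> vring v (x + y).
Proof.
rewrite /vring; case: (eqVneq x 0) => [->|nx]; first by rewrite add0r.
case: (eqVneq y 0) => [->|ny]; first by rewrite addr0.
case: (eqVneq (x + y) 0) => [->|nxy]; first by left.
move=> /(vring_nz nx) hx /(vring_nz ny) hy; right; have := vAx nx ny nxy; vlia.
Qed.

Lemma vringM x y : vring v x -> vring v y -> vring v (x * y).
Proof.
rewrite /vring; case: (eqVneq x 0) => [->|nx]; first by rewrite mul0r; left.
case: (eqVneq y 0) => [->|ny]; first by rewrite mulr0; left.
move=> /(vring_nz nx) hx /(vring_nz ny) hy; right; rewrite vM //; vlia.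
Qed.

Lemma vringN x : vring v x -> vring v (- x).
Proof. by case=> [->|h]; [left; rewrite oppr0 | right; rewrite vN]. Qed.

Lemma vring1 : vring v 1.
Proof. by right; rewrite v1. Qed.

Lemma vring0 : vring v 0.
Proof. by left. Qed.

Lemma vmaxD x y : vmax v x -> vmax v y -> vmax v (x + y).
Proof.
rewrite /vmax; case: (eqVneq x 0) => [->|nx]; first by rewrite add0r.
case: (eqVneq y 0) => [->|ny]; first by rewrite addr0.
case: (eqVneq (x + y) 0) => [->|nxy]; first by left.
move=> /(vmax_nz nx) hx /(vmax_nz ny) hy; right; have := vAx nx ny nxy; vlia.
Qed.

Lemma vmaxM x y : vring v x -> vmax v y -> vmax v (x * y).
Proof.
rewrite /vring /vmax; case: (eqVneq x 0) => [->|nx]; first by rewrite mul0r; left.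
case: (eqVneq y 0) => [->|ny]; first by rewrite mulr0; left.
move=> /(vring_nz nx) hx /(vmax_nz ny) hy; right; rewrite vM //; vlia.
Qed.

Lemma vmaxN x : vmax v x -> vmax v (- x).
Proof. by case=> [->|h]; [left; rewrite oppr0 | right; rewrite vN]. Qed.

Lemma vmax_ring x : vmax v x -> vring v x.
Proof. rewrite /vmax /vring; case; auto; vlia. Qed.


Definition mkv (a b : F) : vec F := \row_(j < 2) (if (j : nat) == 0%N then a else b).

Lemma ord2E (j : 'I_2) : j = 0 \/ j = 1.
Proof. case: j => [[|[|//]]] p; [left|right]; exact: val_inj. Qed.

Lemma mkv00 a b : mkv a b 0 0 = a. Proof. by rewrite mxE. Qed.
Lemma mkv01 a b : mkv a b 0 1 = b. Proof. by rewrite mxE. Qed.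

Lemma vecE (x : vec F) : x = mkv (x 0 0) (x 0 1).
Proof. apply/rowP => j; case: (ord2E j) => ->; by rewrite mxE. Qed.

Lemma mkvD a b c d : mkv a b + mkv c d = mkv (a + c) (b + d).
Proof. apply/rowP => j; case: (ord2E j) => ->; by rewrite !mxE. Qed.

Lemma mkvZ k a b : k *: mkv a b = mkv (k * a) (k * b).
Proof. apply/rowP => j; case: (ord2E j) => ->; by rewrite !mxE. Qed.

Lemma mkvN a b : - mkv a b = mkv (- a) (- b).
Proof. apply/rowP => j; case: (ord2E j) => ->; by rewrite !mxE. Qed.

Lemma mkv0 : 0 = mkv 0 0.
Proof. apply/rowP => j; case: (ord2E j) => ->; by rewrite !mxE. Qed.

Lemma std_lat : is_lattice v (std_lattice v).
Proof.
split.
- by rewrite mkv0 /std_lattice !mxE; split; left.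
- move=> x y [h1 h2] [h3 h4]; rewrite /std_lattice !mxE; split; exact: vringD.
- move=> a x ha [h1 h2]; rewrite /std_lattice !mxE; split; exact: vringM.
- exists 2%N, (fun i : 'I_2 => [:: mkv 1 0; mkv 0 1]`_i); split.
    move=> i; case: (ord2E i) => -> /=; rewrite /std_lattice !mxE /=; split;
      (apply: vring0 || apply: vring1).
  move=> x [h1 h2]; exists (fun i : 'I_2 => [:: x 0 0; x 0 1]`_i); split.
    by move=> i; case: (ord2E i) => ->.
  rewrite !big_ord_recl big_ord0 addr0 /= !mkvZ mkvD {1}(vecE x).
  by rewrite !mulr1 !mulr0 addr0 add0r.
- move=> w; exists 2%N, (fun i : 'I_2 => [:: mkv 1 0; mkv 0 1]`_i),
    (fun i : 'I_2 => [:: w 0 0; w 0 1]`_i); split.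
    move=> i; case: (ord2E i) => -> /=; rewrite /std_lattice !mxE /=; split;
      (apply: vring0 || apply: vring1).
  rewrite !big_ord_recl big_ord0 addr0 /= !mkvZ mkvD {1}(vecE w).
  by rewrite !mulr1 !mulr0 addr0 add0r.
Qed.


Lemma v_neq x y : x != 0 -> y != 0 -> v x != v y ->
  x + y != 0 /\ ((v x < v y /\ v (x + y) = v x) \/ (v y < v x /\ v (x + y) = v y)).
Proof.
move=> nx ny; case: (ltgtP (v x) (v y)) => h //= _.
- by have [? ?] := v_lt nx ny h; split => //; left.
- by have [? ?] := v_lt ny nx h; rewrite addrC; split => //; right.
Qed.

Lemma vdiv a z : a != 0 -> v a <= 1 -> vmax v z -> exists r, vring v r /\ z = a * r.
Proof.
move=> na va hz; exists (z / a); split; last by rewrite mulrC divfK.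
case: (eqVneq z 0) => [->|nz]; first by rewrite mul0r; left.
right; have := vmax_nz nz hz; rewrite vM ?invr_neq0 // vV //; vlia.
Qed.

Lemma vmax_sq d : vmax v (d ^+ 2) -> vmax v d.
Proof.
case: (eqVneq d 0) => [->|nd]; first by left.
move=> h; right; have := vmax_nz (expf_neq0 2 nd) h; rewrite vX2 //; vlia.
Qed.

Lemma sq_inj x y : vmax v 2 -> vring v x -> vring v y -> vmax v (x ^+ 2 - y ^+ 2) -> vmax v (x - y).
Proof.
move=> h2 hx hy h; apply: vmax_sq.
have -> : (x - y) ^+ 2 = (x ^+ 2 - y ^+ 2) + (- ((y * (x - y)) * 2)) by ring.
apply: vmaxD => //; apply: vmaxN; apply: vmaxM => //.
apply: vringM => //; apply: vringD => //; exact: vringN.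
Qed.

Lemma vringX x n : vring v x -> vring v (x ^+ n).
Proof.
move=> hx; elim: n => [|n IH]; first by rewrite expr0; exact: vring1.
by rewrite exprS; apply: vringM.
Qed.

Lemma pow_inj n x y : vmax v 2 -> vring v x -> vring v y ->
  vmax v (x ^+ (2 ^ n) - y ^+ (2 ^ n)) -> vmax v (x - y).
Proof.
move=> h2; elim: n x y => [|n IH] x y hx hy; first by rewrite !expr1.
rewrite expnS !exprM => h; apply: sq_inj => //.
by apply: IH => //; apply: vringX.
Qed.

Lemma perfect a : finite_residue v -> vmax v 2 -> vring v a ->
  exists xi, vmax v (a - xi ^+ 2).
Proof.
move=> [s [_ hs]] h2 ha.
have bo : forall n, vring v (a ^+ n) by move=> n; apply: vringX.
pose vmaxb d := (d == 0) || (1 <= v d).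
have vmaxP d : vmax v d <-> vmaxb d.
  rewrite /vmax /vmaxb; split; first by case=> [->|->]; rewrite ?eqxx ?orbT.
  by case/orP => [/eqP|]; auto.
case: s hs => [|y0 s'] hs; first by have [y] := hs a ha; rewrite in_nil.
pose P (n : nat) := fun y => vmaxb (a ^+ (2 ^ n) - y).
have hP : forall n, has (P n) (y0 :: s').
  move=> n; have [y ys hy] := hs _ (bo (2 ^ n)%N).
  by apply/hasP; exists y => //; apply/vmaxP.
have hf : forall n, (find (P n) (y0 :: s') < (size s').+1)%N.
  by move=> n; rewrite -[(size s').+1]/(size (y0 :: s')) -has_find.
pose f (i : 'I_(size s').+2) : 'I_(size s').+1 := inord (find (P i) (y0 :: s')).
have claim : forall i j : nat, (i < j)%N -> vmax v (a ^+ (2 ^ i) - a ^+ (2 ^ j)) ->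
    exists xi, vmax v (a - xi ^+ 2).
  move=> i j lt h.
  have ej : j = ((j - i).-1.+1 + i)%N by lia.
  set k := (j - i).-1 in ej; rewrite ej expnD exprM in h.
  have := pow_inj h2 ha (bo _) h; rewrite expnSr exprM => hh.
  by exists (a ^+ (2 ^ k)).
have key : forall i j : 'I_(size s').+2, f i = f j -> vmax v (a ^+ (2 ^ i) - a ^+ (2 ^ j)).
  move=> i j e; have := congr1 (@nat_of_ord _) e; rewrite /f !inordK ?hf // => ef.
  have hi := nth_find y0 (hP i); have hj := nth_find y0 (hP j).
  rewrite ef in hi; move/vmaxP: hi => hi; move/vmaxP: hj => hj.
  have -> : a ^+ (2 ^ i) - a ^+ (2 ^ j) =
     (a ^+ (2 ^ i) - nth y0 (y0 :: s') (find (P j) (y0 :: s')))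
     + - (a ^+ (2 ^ j) - nth y0 (y0 :: s') (find (P j) (y0 :: s'))) by ring.
  by apply: vmaxD => //; apply: vmaxN.
have : ~~ injectiveb f.
  apply/negP => /injectiveP inj; have := leq_card f inj; by rewrite !card_ord ltnn.
case/injectivePn => i [j] nij fij.
have := key _ _ fij; move: nij; rewrite neq_ltn => /orP [lt|lt] h.
  exact: (claim i j).
apply: (claim j i) => //; rewrite -opprB; exact: vmaxN.
Qed.


Lemma odd_std lam : v lam = 1 -> lam != 0 ->
  forall w, vring v (qform lam w) -> std_lattice v w.
Proof.
move=> vl nl w; rewrite /qform /std_lattice.
move: (w 0 0) (w 0 1) => x y.
case: (eqVneq x 0) => [->|nx].
  rewrite expr2 mul0r add0r; case: (eqVneq y 0) => [->|ny]; first by split; left.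
  move=> h; split; first by left.
  have := vring_nz (mulf_neq0 nl (expf_neq0 2 ny)) h.
  rewrite vM ?expf_neq0 // vX2 //; right; vlia.
case: (eqVneq y 0) => [->|ny].
  rewrite (expr2 (0 : F)) mul0r mulr0 addr0 => h; split; last by left.
  have := vring_nz (expf_neq0 2 nx) h; rewrite vX2 //; right; vlia.
move=> h; have nx2 := expf_neq0 2 nx; have nly := mulf_neq0 nl (expf_neq0 2 ny).
have hne : v (x ^+ 2) != v (lam * y ^+ 2).
  rewrite vX2 // vM ?expf_neq0 // vX2 // vl; apply/eqP; vlia.
have [nq hc] := v_neq nx2 nly hne.
have := vring_nz nq h; move: hc; rewrite vX2 // vM ?expf_neq0 // vX2 // vl.
move=> hc hq; split; right; move: hc hq; vlia.
Qed.

Lemma odd_def lam : v lam = 1 -> lam != 0 ->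
  forall z, qdefect v (- lam) z <-> vmax v z.
Proof.
move=> vl nl z; split.
  move/(_ 0) => [r [hr ->]]; rewrite expr2 mul0r subr0 mulrC.
  apply: vmaxM => //; right; rewrite vN; vlia.
move=> hz xi; apply: vdiv => //.
  case: (eqVneq xi 0) => [->|nxi].
    rewrite expr2 mul0r subr0 oppr_eq0 //.
  have nx2 : - xi ^+ 2 != 0 by rewrite oppr_eq0 expf_neq0.
  have nl' : - lam != 0 by rewrite oppr_eq0.
  have hne : v (- lam) != v (- xi ^+ 2) by rewrite !vN vX2 // vl; apply/eqP; vlia.
  by have [] := v_neq nl' nx2 hne.
case: (eqVneq xi 0) => [->|nxi].
  by rewrite expr2 mul0r subr0 vN vl.
have nx2 : - xi ^+ 2 != 0 by rewrite oppr_eq0 expf_neq0.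
have nl' : - lam != 0 by rewrite oppr_eq0.
have hne : v (- lam) != v (- xi ^+ 2) by rewrite !vN vX2 // vl; apply/eqP; vlia.
have [_ hc] := v_neq nl' nx2 hne; move: hc; rewrite !vN vX2 // vl; vlia.
Qed.


Lemma unit_std lam pi : v lam = 0 -> lam != 0 -> pi != 0 -> v pi = 1 ->
  qdefect v (- lam) pi ->
  forall w, vring v (qform lam w) -> std_lattice v w.
Proof.
move=> vl nl npi vpi hd w; rewrite /qform /std_lattice.
move: (w 0 0) (w 0 1) => x y.
case: (eqVneq x 0) => [->|nx].
  rewrite expr2 mul0r add0r; case: (eqVneq y 0) => [->|ny]; first by split; left.
  move=> h; split; first by left.
  have := vring_nz (mulf_neq0 nl (expf_neq0 2 ny)) h.
  rewrite vM ?expf_neq0 // vX2 //; right; vlia.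
case: (eqVneq y 0) => [->|ny].
  rewrite (expr2 (0 : F)) mul0r mulr0 addr0 => h; split; last by left.
  have := vring_nz (expf_neq0 2 nx) h; rewrite vX2 //; right; vlia.
move=> h; have nx2 := expf_neq0 2 nx; have nly := mulf_neq0 nl (expf_neq0 2 ny).
case: (eqVneq (v x) (v y)) => [exy|nexy].
  case: (lerP 0 (v x)) => [hx|hx]; first by split; right; vlia.
  pose t := x / y.
  have eq : x ^+ 2 + lam * y ^+ 2 = y ^+ 2 * (t ^+ 2 + lam) by rewrite /t; field.
  rewrite eq in h.
  have [r [hr epi]] := hd t.
  have e2 : - lam - t ^+ 2 = - (t ^+ 2 + lam) by ring.
  rewrite e2 in epi.
  case: (eqVneq (t ^+ 2 + lam) 0) => [e0|ne].
    by move: npi; rewrite epi e0 oppr0 mul0r eqxx.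
  have nr : r != 0 by apply: contraNneq npi => e; rewrite epi e mulr0.
  have := vring_nz (mulf_neq0 (expf_neq0 2 ny) ne) h.
  have := vring_nz nr hr.
  have := congr1 v epi; rewrite vM ?oppr_eq0 // vN vpi vM ?expf_neq0 // vX2 //.
  move: exy hx; vlia.
have hne : v (x ^+ 2) != v (lam * y ^+ 2).
  rewrite vX2 // vM ?expf_neq0 // vX2 // vl; apply/eqP; move/eqP: nexy; vlia.
have [nq hc] := v_neq nx2 nly hne.
have := vring_nz nq h; move: hc; rewrite vX2 // vM ?expf_neq0 // vX2 // vl.
move=> hc hq; split; right; move: hc hq; vlia.
Qed.

Lemma unit_def lam : finite_residue v -> vmax v 2 -> vring v lam ->
  (forall t, t ^+ 2 + lam != 0 /\ v (t ^+ 2 + lam) <= 1) ->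
  forall z, qdefect v (- lam) z <-> vmax v z.
Proof.
move=> hres h2 hl ht z; split.
  have [xi hxi] := perfect hres h2 (vringN hl).
  move/(_ xi) => [r [hr ->]]; rewrite mulrC; exact: vmaxM.
move=> hz xi; have [n1 n2] := ht xi.
have e2 : - lam - xi ^+ 2 = - (xi ^+ 2 + lam) by ring.
by rewrite e2; apply: vdiv => //; rewrite ?oppr_eq0 ?vN.
Qed.


Lemma ord3E (j : 'I_3) : (j : nat) = 0%N \/ (j : nat) = 1%N \/ (j : nat) = 2%N.
Proof. case: j => [[|[|[|//]]]] p /=; auto. Qed.

Lemma unit_ext lam : v lam = 0 -> lam != 0 -> vmax v 2 ->
  o_maximal v lam (std_lattice v) ->
  forall t, t ^+ 2 + lam != 0 /\ v (t ^+ 2 + lam) <= 1.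
Proof.
move=> vl nl h2 [_ _ hmax] t.
suff H : ~ (t ^+ 2 + lam = 0 \/ 2 <= v (t ^+ 2 + lam)).
  case: (eqVneq (t ^+ 2 + lam) 0) => [e|ne]; first by exfalso; apply: H; left.
  split => //; case: (lerP (v (t ^+ 2 + lam)) 1) => // hh.
  by exfalso; apply: H; right; move: hh; vlia.
move=> H.
have vt : vring v t.
  case: (eqVneq t 0) => [->|nt]; first by left.
  case: (lerP 0 (v t)) => [|hlt]; first by right.
  have nt2 := expf_neq0 2 nt.
  have hne : v (t ^+ 2) != v lam by rewrite vX2 // vl; apply/eqP; move: hlt; vlia.
  have [nq [[_ hc]|[hc _]]] := v_neq nt2 nl hne; move: hc; rewrite ?vX2 // ?vl.
    by case: H => [e|]; [rewrite e eqxx in nq | move: hlt; vlia].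
  move: hlt; vlia.
case: hv => _ _ [pi [npi vpi]].
have [s0 sD sZ _ _] := std_lat.
pose u := pi^-1.
have nu : u != 0 by rewrite invr_neq0.
have vu : v u = -1 by rewrite vV // vpi.
pose w := mkv (t * u) u.
pose L (x : vec F) := exists c, vring v c /\ std_lattice v (x - c *: w).
have stdL : forall x, std_lattice v x -> L x.
  by move=> x hx; exists 0; split; [left | rewrite scale0r subr0].
have e0L : L (mkv 1 0).
  by apply: stdL; rewrite /std_lattice !mxE /=; split; [exact: vring1 | left].
have e1L : L (mkv 0 1).
  by apply: stdL; rewrite /std_lattice !mxE /=; split; [left | exact: vring1].
have wL : L w by exists 1; split; [exact: vring1 | rewrite scale1r subrr].
apply: (hmax L).
- split.
  + exact: stdL.
  + move=> x y [c1 [hc1 hx]] [c2 [hc2 hy]]; exists (c1 + c2); split; first exact: vringD.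
    have -> : x + y - (c1 + c2) *: w = (x - c1 *: w) + (y - c2 *: w).
      by rewrite scalerDl opprD addrACA.
    exact: sD.
  + move=> a x ha [c [hc hx]]; exists (a * c); split; first exact: vringM.
    by rewrite -scalerA -scalerBr; apply: sZ.
  + exists 3%N, (fun i : 'I_3 => [:: mkv 1 0; mkv 0 1; w]`_i); split.
      by move=> i; case: (ord3E i) => [->|[->|->]].
    move=> x [c [hc [h1 h2']]].
    exists (fun i : 'I_3 => [:: (x - c *: w) 0 0; (x - c *: w) 0 1; c]`_i); split.
      by move=> i; case: (ord3E i) => [->|[->|->]].
    rewrite !big_ord_recl big_ord0 addr0 /= addrA !mkvZ mkvD !mulr1 !mulr0 addr0 add0r.
    by rewrite -vecE subrK.
  + move=> y; exists 2%N, (fun i : 'I_2 => [:: mkv 1 0; mkv 0 1]`_i),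
      (fun i : 'I_2 => [:: y 0 0; y 0 1]`_i); split.
      by move=> i; case: (ord2E i) => ->.
    rewrite !big_ord_recl big_ord0 addr0 /= !mkvZ mkvD {1}(vecE y).
    by rewrite !mulr1 !mulr0 addr0 add0r.
- exact: stdL.
- exists w; split => //; rewrite /std_lattice mkv01 => -[_ hu].
  by have := vring_nz nu hu; rewrite vu.
- move=> x [c [hc [h1 h2']]].
  move: h1 h2'; set a := (x - c *: w) 0 0; set b := (x - c *: w) 0 1 => ha hb.
  have ex : x = mkv a b + c *: w by rewrite /a /b -vecE subrK.
  rewrite ex /qform /w mkvZ mkvD mkv00 mkv01.
  have -> : (a + c * (t * u)) ^+ 2 + lam * (b + c * u) ^+ 2 =
    (a ^+ 2 + lam * b ^+ 2) + (u * 2) * (c * (a * t + lam * b))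
    + c ^+ 2 * ((t ^+ 2 + lam) * u ^+ 2) by ring.
  have hl : vring v lam by right; rewrite vl.
  apply: vringD; first apply: vringD.
  + by apply: vringD; [apply: vringX | apply: vringM => //; apply: vringX].
  + apply: vringM.
      case: (eqVneq (2 : F) 0) => [->|n2]; first by rewrite mulr0; left.
      right; rewrite vM //; have := vmax_nz n2 h2; rewrite vu; vlia.
    by apply: vringM => //; apply: vringD; apply: vringM.
  + apply: vringM; first exact: vringX.
    case: (eqVneq (t ^+ 2 + lam) 0) => [->|ne]; first by rewrite mul0r; left.
    right; rewrite vM ?expf_neq0 // vX2 // vu.
    case: H => [e|hh]; first by rewrite e eqxx in ne.
    move: hh; vlia.
Qed.

End Val.

Theorem lemma7p1 (F : fieldType) (v : F -> int) (lam : F) :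
  dyadic_local_field v ->
  vring v lam -> lam != 0 -> (v lam = 0 \/ v lam = 1) ->
  (o_maximal v lam (std_lattice v) <->
   (forall z : F, qdefect v (- lam) z <-> vmax v z)).
Proof.
move=> [hv _ hres _ h2] hl nl hvl.
have normo : norm_in_o v lam (std_lattice v).
  move=> x [h1 h3]; rewrite /qform.
  apply: (vringD hv); [apply: (vringX hv) | apply: (vringM hv) => //; apply: (vringX hv)] => //.
have maxi : (forall w, vring v (qform lam w) -> std_lattice v w) ->
    o_maximal v lam (std_lattice v).
  move=> H; split => //; first exact: (std_lat hv).
  move=> L' _ _ [x [hx nx]] hn; exact: nx (H x (hn x hx)).
case: hvl => vl.
  split.
    by move=> hm; apply: (unit_def hv) => //; apply: (unit_ext hv).
  move=> hd; apply: maxi.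
  case: (hv) => _ _ [pi [npi vpi]].
  apply: (unit_std hv vl nl npi vpi); apply/hd; right; rewrite vpi.
  done.
split; first by move=> _; apply: (odd_def hv).
by move=> _; apply: maxi; apply: (odd_std hv).
Qed.
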